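(* If $a\ne 1$ and either $b\ne 0, c=0$ or $b=0, c\ne 0$, then $\check{f}$ has at most one root. Furthermore, exactly one of the following statements is true. 1. $\check{f}$ has exactly one root $x_0$ at which it changes sign. The derivative $\check{f}'$ is nonzero at $x_0$, and either $a>1,b>0,c=0$ or $a>1,b=0,c<0$ or $a<1,b<0,c=0$ or $a<1,b=0,c>0$. 2. $\check{f}$ has no root, and either $a<1,b>0,c=0$ or $a<1,b=0,c<0$ or $a>1,b<0,c=0$ or $a>1,b=0,c>0$.
   Context: A function $f:\mathbb{R}^+\to\mathbb{R}^+$ is called strongly hyperbolic if: (1) $\lim_{x\to 0+} f(x)=+\infty$ and $\lim_{x\to+\infty} f(x)=0$; (2) $f$ is strictly convex; (3) for each $b\in\mathbb{R}$, $\lim_{x\to+\infty} f(x+b)/f(x)=1$; (4) $f$ is differentiable; (5) $\ln|f'(x)|$ is strictly convex. Let $f$ be a strongly hyperbolic function, let $a>0$, $b,c\in\mathbb{R}$, and define $\check{f}:(\max\{-b,0\},\infty)\to\mathbb{R}$ by $\check{f}(x)=af(x+b)+c-f(x)$. *)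

(* Defs.v *)
From Stdlib Require Import Reals Lra.
From Coquelicot Require Import Coquelicot.
Open Scope R_scope.

Definition strictly_convex_pos (g : R -> R) : Prop :=
  forall x y t, 0 < x -> 0 < y -> x <> y -> 0 < t < 1 ->
    g (t * x + (1 - t) * y) < t * g x + (1 - t) * g y.

(* f : R^+ -> R^+ is modelled as f : R -> R; only its values on (0,+oo) matter. *)
Definition strongly_hyperbolic (f : R -> R) : Prop :=
  (forall x, 0 < x -> 0 < f x) /\
  filterlim f (at_right 0) (Rbar_locally p_infty) /\
  filterlim f (Rbar_locally p_infty) (locally 0) /\
  strictly_convex_pos f /\
  (forall b : R, filterlim (fun x => f (x + b) / f x) (Rbar_locally p_infty) (locally 1)) /\
  (forall x, 0 < x -> ex_derive f x) /\
  strictly_convex_pos (fun x => ln (Rabs (Derive f x))).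

Definition fcheck (f : R -> R) (a b c : R) (x : R) : R :=
  a * f (x + b) + c - f x.

Definition in_dom (b x : R) : Prop := Rmax (- b) 0 < x.

Definition is_root (f : R -> R) (a b c x : R) : Prop :=
  in_dom b x /\ fcheck f a b c x = 0.

Definition changes_sign_at (g : R -> R) (x0 : R) : Prop :=
  exists d, 0 < d /\
    ((forall x, x0 - d < x < x0 -> g x < 0) /\ (forall x, x0 < x < x0 + d -> 0 < g x) \/
     (forall x, x0 - d < x < x0 -> 0 < g x) /\ (forall x, x0 < x < x0 + d -> g x < 0)).

(* Main.v *)
Require Import Defs.
From Stdlib Require Import Reals Lra Psatz.
From Coquelicot Require Import Coquelicot.
Open Scope R_scope.

Lemma lim_inf (g : R -> R) (l : R) :
  filterlim g (Rbar_locally p_infty) (locally l) ->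
  forall eps, 0 < eps -> exists M, forall x, M < x -> Rabs (g x - l) < eps.
Proof.
  intros H eps Heps.
  destruct (H (fun y => Rabs (y - l) < eps)) as [M HM].
  - exists (mkposreal eps Heps). intros y Hy. exact Hy.
  - exists M. exact HM.
Qed.

Lemma lim_right_inf (f : R -> R) :
  filterlim f (at_right 0) (Rbar_locally p_infty) ->
  forall M, exists d, 0 < d /\ forall x, 0 < x < d -> M < f x.
Proof.
  intros H M.
  destruct (H (fun y => M < y)) as [d Hd].
  - exists M. auto.
  - exists d. split. apply cond_pos. intros x Hx. apply Hd.
    unfold ball; simpl; unfold AbsRing_ball, abs, minus, plus, opp; simpl.
    rewrite Ropp_0, Rplus_0_r, Rabs_right; lra. lra.
Qed.

Lemma cont_of_der (f : R -> R) x : ex_derive f x -> continuity_pt f x.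
Proof.
  intros H. apply continuity_pt_filterlim. apply (ex_derive_continuous f x H).
Qed.

Lemma chord (g : R -> R) p q r : strictly_convex_pos g -> 0 < p -> p < q -> q < r ->
  (r - p) * g q < (r - q) * g p + (q - p) * g r.
Proof.
  intros Hc Hp Hpq Hqr.
  set (t := (r - q) / (r - p)).
  assert (Ht : 0 < t < 1).
  { unfold t; split. apply Rdiv_lt_0_compat; lra.
    apply (Rmult_lt_reg_r (r - p)). lra. unfold Rdiv. rewrite Rmult_assoc, Rinv_l; lra. }
  assert (Hq : t * p + (1 - t) * r = q). { unfold t. field. lra. }
  pose proof (Hc p r t Hp ltac:(lra) ltac:(lra) Ht) as H. rewrite Hq in H.
  assert (E1 : (r - q) = t * (r - p)). { unfold t; field; lra. }
  assert (E2 : (q - p) = (1 - t) * (r - p)). { unfold t; field; lra. }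
  rewrite E1, E2. 
  assert (0 < r - p) by lra. nra.
Qed.
Lemma f_decr f : strongly_hyperbolic f -> forall x y, 0 < x -> x < y -> f y < f x.
Proof.
  intros [Hpos [_ [H0 [Hc _]]]] x y Hx Hxy.
  destruct (Rlt_or_le (f y) (f x)) as [H|H]; [exact H|exfalso].
  assert (Hz : forall z, y < z -> f y < f z).
  { intros z Hz. pose proof (chord f x y z Hc Hx Hxy Hz) as C.
    assert (0 < y - x) by lra. nra. }
  pose proof (Hpos y ltac:(lra)) as Hfy.
  destruct (lim_inf f 0 H0 (f y) Hfy) as [M HM].
  set (z := Rmax M y + 1).
  assert (M < z) by (unfold z; pose proof (Rmax_l M y); lra).
  assert (y < z) by (unfold z; pose proof (Rmax_r M y); lra).
  specialize (HM z ltac:(lra)). specialize (Hz z ltac:(lra)).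
  rewrite Rminus_0_r in HM. apply Rabs_def2 in HM. lra.
Qed.

Lemma der_le_slope f x y : strictly_convex_pos f -> 0 < x -> x < y -> ex_derive f x ->
  Derive f x <= (f y - f x) / (y - x).
Proof.
  intros Hc Hx Hxy Hd.
  pose proof (Derive_correct f x Hd) as HD. apply is_derive_Reals in HD.
  destruct (Rle_or_lt (Derive f x) ((f y - f x) / (y - x))) as [H|H]; [exact H|exfalso].
  set (s := (f y - f x) / (y - x)).
  destruct (HD (Derive f x - s) ltac:(unfold s; lra)) as [d Hdl].
  set (h := Rmin (d/2) ((y - x)/2)).
  assert (Hh0 : 0 < h). { unfold h. apply Rmin_pos. pose proof (cond_pos d); lra. lra. }
  assert (Hh1 : h < d). { unfold h. pose proof (Rmin_l (d/2) ((y-x)/2)). pose proof (cond_pos d); lra. }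
  assert (Hh2 : h < y - x). { unfold h. pose proof (Rmin_r (d/2) ((y-x)/2)). lra. }
  specialize (Hdl h ltac:(lra) ltac:(rewrite Rabs_right; lra)).
  pose proof (chord f x (x + h) y Hc Hx ltac:(lra) ltac:(lra)) as C.
  apply Rabs_def2 in Hdl. destruct Hdl as [_ Hdl].
  assert (Q : (f (x + h) - f x) / h < s).
  { unfold s. apply (Rmult_lt_reg_r (h * (y - x))). nra.
    field_simplify; [|lra|lra]. nra. }
  lra.
Qed.

Lemma f_der_neg f : strongly_hyperbolic f -> forall x, 0 < x -> Derive f x < 0.
Proof.
  intros Hf x Hx.
  pose proof (f_decr f Hf x (x+1) Hx ltac:(lra)).
  destruct Hf as [_ [_ [_ [Hc [_ [Hd _]]]]]].
  pose proof (der_le_slope f x (x+1) Hc Hx ltac:(lra) (Hd x Hx)).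
  replace (x + 1 - x) with 1 in H0 by ring. lra.
Qed.
Lemma conv_shift (L : R -> R) b x z : strictly_convex_pos L -> 0 < b -> 0 < x -> x < z ->
  L (x + b) - L x < L (z + b) - L z.
Proof.
  intros Hc Hb Hx Hxz.
  destruct (Rtotal_order z (x + b)) as [H|[H|H]].
  - pose proof (chord L x z (x+b) Hc Hx Hxz H) as C1.
    pose proof (chord L z (x+b) (z+b) Hc ltac:(lra) H ltac:(lra)) as C2.
    set (d := z - x) in *. set (e := x + b - z) in *.
    replace (x + b - x) with (d + e) in C1 by (unfold d, e; ring).
    replace (z + b - z) with (d + e) in C2 by (unfold d, e; ring).
    replace (x + b - z) with e in C1 by (unfold e; ring).
    replace (z - x) with d in C1 by (unfold d; ring).
    replace (z + b - (x + b)) with d in C2 by (unfold d; ring).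
    replace (x + b - z) with e in C2 by (unfold e; ring).
    assert (0 < e) by (unfold e; lra). assert (0 < d) by (unfold d; lra).
    assert (e * (L (x + b) - L x) < e * (L (z + b) - L z)) by nra.
    nra.
  - subst z. pose proof (chord L x (x+b) (x+b+b) Hc Hx ltac:(lra) ltac:(lra)) as C.
    replace (x + b + b - x) with (2*b) in C by ring.
    replace (x + b + b - (x + b)) with b in C by ring.
    replace (x + b - x) with b in C by ring. nra.
  - pose proof (chord L x (x+b) z Hc Hx ltac:(lra) H) as C1.
    pose proof (chord L (x+b) z (z+b) Hc ltac:(lra) H ltac:(lra)) as C2.
    replace (z + b - (x + b)) with (z - x) in C2 by ring.
    replace (z + b - z) with b in C2 by ring.
    replace (x + b - x) with b in C1 by ring.
    assert (0 < z - x - b) by lra.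
    replace (z - (x + b)) with (z - x - b) in C1, C2 by ring.
    assert ((z - x - b) * (L (x + b) - L x) < (z - x - b) * (L (z + b) - L z)) by nra.
    nra.
Qed.

Lemma dratio_incr f b x z : strongly_hyperbolic f -> 0 < b -> 0 < x -> x < z ->
  Derive f (x + b) / Derive f x < Derive f (z + b) / Derive f z.
Proof.
  intros Hf Hb Hx Hxz.
  pose proof (f_der_neg f Hf) as Hn.
  pose proof (Hn x Hx). pose proof (Hn z ltac:(lra)).
  pose proof (Hn (x+b) ltac:(lra)). pose proof (Hn (z+b) ltac:(lra)).
  destruct Hf as [_ [_ [_ [_ [_ [_ Hc]]]]]].
  pose proof (conv_shift _ b x z Hc Hb Hx Hxz) as C. simpl in C.
  rewrite !Rabs_left in C by lra.
  rewrite <- !ln_div in C by lra.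
  apply ln_lt_inv in C; [| apply Rdiv_lt_0_compat; lra | apply Rdiv_lt_0_compat; lra].
  replace (Derive f (x + b) / Derive f x) with (- Derive f (x + b) / - Derive f x) by (field; lra).
  replace (Derive f (z + b) / Derive f z) with (- Derive f (z + b) / - Derive f z) by (field; lra).
  exact C.
Qed.
Lemma mvt_pos (g dg : R -> R) l x y : (forall z, l < z -> is_derive g z (dg z)) ->
  l < x -> x < y -> exists c, x <= c <= y /\ g y - g x = dg c * (y - x).
Proof.
  intros Hd Hx Hxy.
  destruct (MVT_gen g x y dg) as [c [Hc E]].
  - intros z Hz. apply Hd. rewrite Rmin_left in Hz by lra. lra.
  - intros z Hz. rewrite Rmin_left in Hz by lra. apply cont_of_der. exists (dg z). apply Hd. lra.
  - exists c. rewrite Rmin_left, Rmax_right in Hc by lra. auto.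
Qed.

Lemma der_D f b k y : strongly_hyperbolic f -> 0 < b -> 0 < y ->
  is_derive (fun t => f (t + b) - k * f t) y (Derive f (y + b) - k * Derive f y).
Proof.
  intros Hf Hb Hy. destruct Hf as [_ [_ [_ [_ [_ [Hd _]]]]]].
  pose proof (Derive_correct f _ (Hd y Hy)).
  pose proof (Derive_correct f _ (Hd (y+b) ltac:(lra))).
  auto_derive; repeat split; try (apply Hd; lra); try ring.
  all: change (fun x : R => f x) with f; ring.
Qed.
Lemma W_pos f b x : strongly_hyperbolic f -> 0 < b -> 0 < x ->
  0 < Derive f (x + b) * f x - f (x + b) * Derive f x.
Proof.
  intros Hf Hb Hx.
  pose proof (f_der_neg f Hf) as Hn.
  set (k := Derive f (x + b) / Derive f x).
  assert (Hk : 0 < k).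
  { unfold k. pose proof (Hn x Hx). pose proof (Hn (x+b) ltac:(lra)).
    replace (Derive f (x + b) / Derive f x) with (- Derive f (x + b) / - Derive f x) by (field; lra).
    apply Rdiv_lt_0_compat; lra. }
  set (D := fun t => f (t + b) - k * f t).
  set (dD := fun t => Derive f (t + b) - k * Derive f t).
  assert (HD : forall z, 0 < z -> is_derive D z (dD z)).
  { intros z Hz. apply der_D; auto. }
  assert (Hneg : forall c, x < c -> dD c < 0).
  { intros c Hc. pose proof (dratio_incr f b x c Hf Hb Hx Hc) as R. fold k in R.
    pose proof (Hn c ltac:(lra)).
    unfold dD.
    replace (Derive f (c + b)) with ((Derive f (c + b) / Derive f c) * Derive f c) by (field; lra).
    nra. }
  assert (Hle : forall c, x <= c -> dD c <= 0).
  { intros c Hc. destruct Hc as [Hc|Hc]. apply Rlt_le, Hneg; auto.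
    subst c. unfold dD, k. right. field. pose proof (Hn x Hx); lra. }
  assert (S1 : D (x + 1) <= D x).
  { destruct (mvt_pos D dD 0 x (x+1) HD Hx ltac:(lra)) as [c [Hc E]].
    pose proof (Hle c ltac:(lra)). nra. }
  assert (S2 : forall u y, x + 1 <= u -> u < y -> D y < D u).
  { intros u y Hu Huy. destruct (mvt_pos D dD 0 u y HD ltac:(lra) Huy) as [c [Hc E]].
    pose proof (Hneg c ltac:(lra)). nra. }
  assert (S3 : 0 <= D (x + 2)).
  { destruct (Rle_or_lt 0 (D (x + 2))) as [H|H]; [exact H|exfalso].
    destruct Hf as [Hpos [_ [H0 _]]].
    set (eps := - D (x + 2) / (k + 1)).
    assert (Heps : 0 < eps) by (unfold eps; apply Rdiv_lt_0_compat; lra).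
    destruct (lim_inf f 0 H0 eps Heps) as [M HM].
    set (y := Rmax M (x + 2) + 1).
    assert (M < y) by (unfold y; pose proof (Rmax_l M (x+2)); lra).
    assert (x + 2 < y) by (unfold y; pose proof (Rmax_r M (x+2)); lra).
    specialize (HM y ltac:(lra)). rewrite Rminus_0_r in HM. apply Rabs_def2 in HM.
    pose proof (S2 (x+2) y ltac:(lra) ltac:(lra)).
    pose proof (Hpos (y + b) ltac:(lra)).
    assert (E : D (x + 2) = - (k + 1) * eps) by (unfold eps; field; lra).
    assert (D y > - k * eps) by (unfold D; nra). nra. }
  pose proof (S2 (x+1) (x+2) ltac:(lra) ltac:(lra)).
  assert (0 < D x) by lra.
  pose proof (Hn x Hx).
  replace (Derive f (x + b) * f x - f (x + b) * Derive f x) with (- Derive f x * D x).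
  nra. unfold D, k. field. lra.
Qed.
Lemma W_neg f b x : strongly_hyperbolic f -> b < 0 -> - b < x ->
  Derive f (x + b) * f x - f (x + b) * Derive f x < 0.
Proof.
  intros Hf Hb Hx.
  pose proof (W_pos f (- b) (x + b) Hf ltac:(lra) ltac:(lra)) as H.
  replace (x + b + - b) with x in H by ring. lra.
Qed.

Lemma der_r f b x : strongly_hyperbolic f -> 0 < x -> 0 < x + b ->
  is_derive (fun t => f (t + b) / f t) x
    ((Derive f (x + b) * f x - f (x + b) * Derive f x) / (f x) ^ 2).
Proof.
  intros Hf Hx Hxb. pose proof (proj1 Hf x Hx) as Hfx.
  destruct Hf as [_ [_ [_ [_ [_ [Hd _]]]]]].
  pose proof (Derive_correct f _ (Hd x Hx)).
  pose proof (Derive_correct f _ (Hd (x+b) Hxb)).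
  auto_derive; repeat split; try (apply Hd; lra); try lra.
  all: change (fun x : R => f x) with f; field; lra.
Qed.

Lemma der_fcheck f a b c x : strongly_hyperbolic f -> 0 < x -> 0 < x + b ->
  is_derive (fcheck f a b c) x (a * Derive f (x + b) - Derive f x).
Proof.
  intros Hf Hx Hxb.
  destruct Hf as [_ [_ [_ [_ [_ [Hd _]]]]]].
  pose proof (Derive_correct f _ (Hd x Hx)).
  pose proof (Derive_correct f _ (Hd (x+b) Hxb)).
  unfold fcheck.
  auto_derive; repeat split; try (apply Hd; lra); try lra.
  all: change (fun x : R => f x) with f; ring.
Qed.

Lemma r_incr f b x y : strongly_hyperbolic f -> 0 < b -> 0 < x -> x < y ->
  f (x + b) / f x < f (y + b) / f y.
Proof.
  intros Hf Hb Hx Hxy.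
  destruct (mvt_pos (fun t => f (t + b) / f t)
     (fun x => (Derive f (x + b) * f x - f (x + b) * Derive f x) / (f x) ^ 2) 0 x y)
    as [c [Hc E]]; auto.
  - intros z Hz. apply der_r; auto; lra.
  - pose proof (W_pos f b c Hf Hb ltac:(lra)). pose proof (proj1 Hf c ltac:(lra)).
    assert (0 < (Derive f (c + b) * f c - f (c + b) * Derive f c) / f c ^ 2).
    { apply Rdiv_lt_0_compat; auto. apply pow_lt; auto. }
    nra.
Qed.

Lemma r_decr f b x y : strongly_hyperbolic f -> b < 0 -> - b < x -> x < y ->
  f (y + b) / f y < f (x + b) / f x.
Proof.
  intros Hf Hb Hx Hxy.
  destruct (mvt_pos (fun t => f (t + b) / f t)
     (fun x => (Derive f (x + b) * f x - f (x + b) * Derive f x) / (f x) ^ 2) (-b) x y)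
    as [c [Hc E]]; auto.
  - intros z Hz. apply der_r; auto; lra.
  - pose proof (W_neg f b c Hf Hb ltac:(lra)). pose proof (proj1 Hf c ltac:(lra)).
    assert (0 < - (Derive f (c + b) * f c - f (c + b) * Derive f c) / f c ^ 2).
    { apply Rdiv_lt_0_compat; try lra. apply pow_lt; auto. }
    assert (Ee : (Derive f (c + b) * f c - f (c + b) * Derive f c) / f c ^ 2 =
      - (- (Derive f (c + b) * f c - f (c + b) * Derive f c) / f c ^ 2)) by (field; lra).
    rewrite Ee in E. nra.
Qed.
Lemma ivt_prod (g : R -> R) l u v : (forall x, l < x -> continuity_pt g x) ->
  l < u -> u < v -> g u * g v < 0 -> exists z, u < z < v /\ g z = 0.
Proof.
  intros Hc Hu Huv Hp.
  destruct (Rlt_or_le (g u) 0) as [H|H].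
  - assert (0 < g v) by nra.
    destruct (Ranalysis5.IVT_interv g u v) as [z [Hz E]]; auto.
    { intros a Ha. apply Hc. lra. }
    exists z. split; auto. destruct Hz as [[Hz1|Hz1] [Hz2|Hz2]]; subst; try lra.
  - assert (g v < 0) by nra. assert (0 < g u) by nra.
    destruct (Ranalysis5.IVT_interv (fun x => - g x) u v) as [z [Hz E]]; auto.
    { intros a Ha. apply continuity_pt_opp. apply Hc. lra. }
    lra. lra.
    exists z. split; [|lra]. destruct Hz as [[Hz1|Hz1] [Hz2|Hz2]]; subst; try lra.
Qed.

Lemma same_sign (g : R -> R) l x0 : (forall x, l < x -> continuity_pt g x) ->
  (forall z, l < z -> g z = 0 -> z = x0) ->
  forall p q, l < p -> l < q -> ((p < x0 /\ q < x0) \/ (x0 < p /\ x0 < q)) -> 0 < g p * g q.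
Proof.
  intros Hc Hu.
  assert (K : forall p q, l < p -> p < q -> ((p < x0 /\ q < x0) \/ (x0 < p /\ x0 < q)) -> 0 < g p * g q).
  { intros p q Hp Hpq Hpos.
    assert (g p <> 0). { intros E. specialize (Hu p Hp E). lra. }
    assert (g q <> 0). { intros E. specialize (Hu q ltac:(lra) E). lra. }
    destruct (Rlt_or_le 0 (g p * g q)) as [H1|H1]; auto.
    assert (g p * g q < 0).
    { destruct H1 as [H1|H1]; auto. apply Rmult_integral in H1. tauto. }
    destruct (ivt_prod g l p q Hc Hp Hpq H2) as [z [Hz E]].
    specialize (Hu z ltac:(lra) E). lra. }
  intros p q Hp Hq Hpos.
  destruct (Rtotal_order p q) as [H|[H|H]].
  - apply K; auto.
  - subst q. assert (g p <> 0). { intros E. specialize (Hu p Hp E). lra. }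
    assert (0 < g p * g p). { apply Rsqr_pos_lt in H. exact H. } auto.
  - rewrite Rmult_comm. apply K; auto. lra.
Qed.

Lemma sign_change_ex (g : R -> R) l s t : (forall x, l < x -> continuity_pt g x) ->
  l < s -> s < t -> g s * g t < 0 ->
  (forall x y, l < x -> l < y -> g x = 0 -> g y = 0 -> x = y) ->
  exists x0, l < x0 /\ g x0 = 0 /\ changes_sign_at g x0.
Proof.
  intros Hc Hs Hst Hp Hu.
  destruct (ivt_prod g l s t Hc Hs Hst Hp) as [x0 [Hx0 E]].
  exists x0. split; [lra|split; auto].
  assert (Hu' : forall z, l < z -> g z = 0 -> z = x0).
  { intros z Hz Ez. apply Hu; auto; lra. }
  pose proof (same_sign g l x0 Hc Hu') as SS.
  exists (x0 - l). split; [lra|].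
  destruct (Rlt_or_le (g s) 0) as [H|H].
  - assert (0 < g t) by nra. left. split.
    + intros x Hx. pose proof (SS x s ltac:(lra) Hs ltac:(lra)). nra.
    + intros x Hx. pose proof (SS x t ltac:(lra) ltac:(lra) ltac:(lra)). nra.
  - assert (g t < 0) by nra. assert (0 < g s) by nra. right. split.
    + intros x Hx. pose proof (SS x s ltac:(lra) Hs ltac:(lra)). nra.
    + intros x Hx. pose proof (SS x t ltac:(lra) ltac:(lra) ltac:(lra)). nra.
Qed.
Lemma in_dom_iff b x : in_dom b x <-> (- b < x /\ 0 < x).
Proof.
  unfold in_dom. split.
  - intros H. pose proof (Rmax_l (-b) 0). pose proof (Rmax_r (-b) 0). lra.
  - intros [H1 H2]. apply Rmax_lub_lt; auto.
Qed.

Lemma f_inj f x y : strongly_hyperbolic f -> 0 < x -> 0 < y -> f x = f y -> x = y.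
Proof.
  intros Hf Hx Hy E. destruct (Rtotal_order x y) as [H|[H|H]]; auto.
  - pose proof (f_decr f Hf x y Hx H). lra.
  - pose proof (f_decr f Hf y x Hy H). lra.
Qed.

Lemma uniq_roots f a b c : strongly_hyperbolic f -> 0 < a -> a <> 1 ->
  ((b <> 0 /\ c = 0) \/ (b = 0 /\ c <> 0)) ->
  forall x y, is_root f a b c x -> is_root f a b c y -> x = y.
Proof.
  intros Hf Ha Ha1 Hcond x y [Dx Ex] [Dy Ey].
  apply in_dom_iff in Dx. apply in_dom_iff in Dy. unfold fcheck in Ex, Ey.
  pose proof (proj1 Hf) as Hpos.
  destruct Hcond as [[Hb Hc]|[Hb Hc]]; subst.
  - assert (Rx : f (x + b) / f x = / a).
    { pose proof (Hpos x ltac:(lra)). field_simplify_eq; lra. }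
    assert (Ry : f (y + b) / f y = / a).
    { pose proof (Hpos y ltac:(lra)). field_simplify_eq; lra. }
    destruct (Rtotal_order x y) as [H|[H|H]]; auto; exfalso.
    + destruct (Rlt_or_le 0 b).
      * pose proof (r_incr f b x y Hf H0 ltac:(lra) H). lra.
      * pose proof (r_decr f b x y Hf ltac:(lra) ltac:(lra) H). lra.
    + destruct (Rlt_or_le 0 b).
      * pose proof (r_incr f b y x Hf H0 ltac:(lra) H). lra.
      * pose proof (r_decr f b y x Hf ltac:(lra) ltac:(lra) H). lra.
  - rewrite Rplus_0_r in Ex, Ey. apply (f_inj f x y Hf); try lra.
    apply (Rmult_eq_reg_l (a - 1)); lra.
Qed.

Lemma cont_fcheck f a b c x : strongly_hyperbolic f -> in_dom b x ->
  continuity_pt (fcheck f a b c) x.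
Proof.
  intros Hf Hx. apply in_dom_iff in Hx. apply cont_of_der.
  eexists. apply der_fcheck; auto; lra.
Qed.

Lemma exists_part f a b c : strongly_hyperbolic f -> 0 < a -> a <> 1 ->
  ((b <> 0 /\ c = 0) \/ (b = 0 /\ c <> 0)) ->
  forall s t, in_dom b s -> s < t -> fcheck f a b c s * fcheck f a b c t < 0 ->
  exists x0, is_root f a b c x0 /\
        (forall y, is_root f a b c y -> y = x0) /\
        changes_sign_at (fcheck f a b c) x0 /\
        ex_derive (fcheck f a b c) x0 /\ Derive (fcheck f a b c) x0 <> 0.
Proof.
  intros Hf Ha Ha1 Hcond s t Hs Hst Hp.
  pose proof (uniq_roots f a b c Hf Ha Ha1 Hcond) as U.
  destruct (sign_change_ex (fcheck f a b c) (Rmax (-b) 0) s t) as [x0 [Hx0 [E Hsc]]]; auto.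
  - intros x Hx. apply cont_fcheck; auto.
  - intros x y Hx Hy Ex Ey. apply U; split; auto.
  - exists x0. assert (R0 : is_root f a b c x0) by (split; auto).
    split; auto. split. { intros y Hy. apply U; auto. }
    split; auto.
    pose proof Hx0 as Hd. apply in_dom_iff in Hd.
    pose proof (der_fcheck f a b c x0 Hf ltac:(lra) ltac:(lra)) as HD.
    split. { eexists; eauto. }
    rewrite (is_derive_unique _ _ _ HD).
    destruct Hcond as [[Hb Hc]|[Hb Hc]]; subst.
    + unfold fcheck in E.
      intros Z.
      destruct (Rlt_or_le 0 b).
      * pose proof (W_pos f b x0 Hf H ltac:(lra)).
        assert (f x0 = a * f (x0 + b)) by lra.
        assert (Derive f x0 = a * Derive f (x0 + b)) by lra.
        rewrite H1, H2 in H0. lra.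
      * pose proof (W_neg f b x0 Hf ltac:(lra) ltac:(lra)).
        assert (f x0 = a * f (x0 + b)) by lra.
        assert (Derive f x0 = a * Derive f (x0 + b)) by lra.
        rewrite H1, H2 in H0. lra.
    + rewrite Rplus_0_r. pose proof (f_der_neg f Hf x0 ltac:(lra)).
      intros Z. assert ((a - 1) * Derive f x0 = 0) by lra.
      apply Rmult_integral in H0. lra.
Qed.
Lemma big_t f b (q : R) : strongly_hyperbolic f -> forall s,
  (q < 1 -> exists t, s < t /\ 0 < t /\ q < f (t + b) / f t) /\
  (1 < q -> exists t, s < t /\ 0 < t /\ f (t + b) / f t < q).
Proof.
  intros Hf s. destruct Hf as [_ [_ [_ [_ [Hr _]]]]].
  split; intros Hq.
  - destruct (lim_inf _ 1 (Hr b) (1 - q) ltac:(lra)) as [M HM].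
    set (t := Rmax M (Rmax s 0) + 1).
    pose proof (Rmax_l M (Rmax s 0)). pose proof (Rmax_r M (Rmax s 0)).
    pose proof (Rmax_l s 0). pose proof (Rmax_r s 0).
    exists t. specialize (HM t ltac:(unfold t; lra)). apply Rabs_def2 in HM.
    unfold t in *; repeat split; lra.
  - destruct (lim_inf _ 1 (Hr b) (q - 1) ltac:(lra)) as [M HM].
    set (t := Rmax M (Rmax s 0) + 1).
    pose proof (Rmax_l M (Rmax s 0)). pose proof (Rmax_r M (Rmax s 0)).
    pose proof (Rmax_l s 0). pose proof (Rmax_r s 0).
    exists t. specialize (HM t ltac:(unfold t; lra)). apply Rabs_def2 in HM.
    unfold t in *; repeat split; lra.
Qed.

Lemma small_s f M : strongly_hyperbolic f -> exists s, 0 < s /\ M < f s.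
Proof.
  intros Hf. destruct Hf as [_ [H0 _]].
  destruct (lim_right_inf f H0 M) as [d [Hd H]].
  exists (d/2). split. lra. apply H. lra.
Qed.

Lemma big_small f eps : strongly_hyperbolic f -> 0 < eps -> forall s,
  exists t, s < t /\ 0 < t /\ f t < eps.
Proof.
  intros Hf He s. pose proof (proj1 Hf) as Hpos. destruct Hf as [_ [_ [H0 _]]].
  destruct (lim_inf f 0 H0 eps He) as [M HM].
  set (t := Rmax M (Rmax s 0) + 1).
  pose proof (Rmax_l M (Rmax s 0)). pose proof (Rmax_r M (Rmax s 0)).
  pose proof (Rmax_l s 0). pose proof (Rmax_r s 0).
  exists t. specialize (HM t ltac:(unfold t; lra)). apply Rabs_def2 in HM.
  unfold t in *; repeat split; lra.
Qed.

Lemma pts1 f a b c : strongly_hyperbolic f -> 0 < a ->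
  ((a > 1 /\ b > 0 /\ c = 0) \/ (a > 1 /\ b = 0 /\ c < 0) \/
   (a < 1 /\ b < 0 /\ c = 0) \/ (a < 1 /\ b = 0 /\ c > 0)) ->
  exists s t, in_dom b s /\ s < t /\ fcheck f a b c s * fcheck f a b c t < 0.
Proof.
  intros Hf Ha H. pose proof (proj1 Hf) as Hpos.
  destruct H as [[H1 [H2 H3]]|[[H1 [H2 H3]]|[[H1 [H2 H3]]|[H1 [H2 H3]]]]]; subst.
  - destruct (small_s f (a * f b) Hf) as [s [Hs Hfs]].
    destruct (proj1 (big_t f b (/a) Hf s)) as [t [Hst [Ht Hr]]].
    { apply (Rmult_lt_reg_l a); try lra. rewrite Rinv_r; lra. }
    exists s, t. split. apply in_dom_iff; lra. split; auto.
    unfold fcheck. pose proof (f_decr f Hf b (s + b) H2 ltac:(lra)).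
    pose proof (Hpos t Ht). pose proof (Hpos (t + b) ltac:(lra)).
    assert (a * f (t + b) + 0 - f t > 0).
    { apply (Rmult_lt_reg_r (/ f t)). apply Rinv_0_lt_compat; lra.
      replace ((a * f (t + b) + 0 - f t) * / f t) with (a * (f (t + b) / f t) - 1) by (field; lra).
      rewrite Rmult_0_l. apply (Rmult_lt_compat_l a) in Hr; auto. rewrite Rinv_r in Hr; lra. }
    assert (a * f (s + b) + 0 - f s < 0) by nra.
    nra.
  - destruct (small_s f (- c / (a - 1)) Hf) as [s [Hs Hfs]].
    destruct (big_small f (- c / (a - 1)) Hf ltac:(apply Rdiv_lt_0_compat; lra) s) as [t [Hst [Ht Hft]]].
    exists s, t. split. apply in_dom_iff; lra. split; auto.
    unfold fcheck. rewrite !Rplus_0_r.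
    assert (a * f s + c - f s > 0).
    { apply (Rmult_lt_compat_l (a - 1)) in Hfs; [|lra].
      replace ((a - 1) * (- c / (a - 1))) with (- c) in Hfs by (field; lra). lra. }
    assert (a * f t + c - f t < 0).
    { apply (Rmult_lt_compat_l (a - 1)) in Hft; [|lra].
      replace ((a - 1) * (- c / (a - 1))) with (- c) in Hft by (field; lra). lra. }
    nra.
  - pose proof (Hpos (- b) ltac:(lra)).
    destruct (small_s f (f (- b) / a) Hf) as [u [Hu Hfu]].
    set (s := u - b).
    destruct (proj2 (big_t f b (/a) Hf s)) as [t [Hst [Ht Hr]]].
    { apply (Rmult_lt_reg_l a); try lra. rewrite Rinv_r; lra. }
    exists s, t. split. apply in_dom_iff; unfold s; lra. split; auto.
    unfold fcheck. pose proof (f_decr f Hf (- b) s ltac:(lra) ltac:(unfold s; lra)).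
    replace (s + b) with u in * by (unfold s; ring).
    assert (a * f u + 0 - f s > 0).
    { apply (Rmult_lt_compat_l a) in Hfu; [|lra].
      replace (a * (f (- b) / a)) with (f (- b)) in Hfu by (field; lra). lra. }
    pose proof (Hpos t Ht).
    assert (a * f (t + b) + 0 - f t < 0).
    { apply (Rmult_lt_reg_r (/ f t)). apply Rinv_0_lt_compat; lra.
      replace ((a * f (t + b) + 0 - f t) * / f t) with (a * (f (t + b) / f t) - 1) by (field; lra).
      rewrite Rmult_0_l. apply (Rmult_lt_compat_l a) in Hr; auto. rewrite Rinv_r in Hr; lra. }
    nra.
  - destruct (small_s f (c / (1 - a)) Hf) as [s [Hs Hfs]].
    destruct (big_small f (c / (1 - a)) Hf ltac:(apply Rdiv_lt_0_compat; lra) s) as [t [Hst [Ht Hft]]].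
    exists s, t. split. apply in_dom_iff; lra. split; auto.
    unfold fcheck. rewrite !Rplus_0_r.
    assert (a * f s + c - f s < 0).
    { apply (Rmult_lt_compat_l (1 - a)) in Hfs; [|lra].
      replace ((1 - a) * (c / (1 - a))) with c in Hfs by (field; lra). lra. }
    assert (a * f t + c - f t > 0).
    { apply (Rmult_lt_compat_l (1 - a)) in Hft; [|lra].
      replace ((1 - a) * (c / (1 - a))) with c in Hft by (field; lra). lra. }
    nra.
Qed.

Lemma noroot f a b c : strongly_hyperbolic f -> 0 < a ->
  ((a < 1 /\ b > 0 /\ c = 0) \/ (a < 1 /\ b = 0 /\ c < 0) \/
   (a > 1 /\ b < 0 /\ c = 0) \/ (a > 1 /\ b = 0 /\ c > 0)) ->
  forall x, ~ is_root f a b c x.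
Proof.
  intros Hf Ha H x [Dx Ex]. apply in_dom_iff in Dx. unfold fcheck in Ex.
  pose proof (proj1 Hf) as Hpos.
  destruct H as [[H1 [H2 H3]]|[[H1 [H2 H3]]|[[H1 [H2 H3]]|[H1 [H2 H3]]]]]; subst.
  - pose proof (f_decr f Hf x (x + b) ltac:(lra) ltac:(lra)).
    pose proof (Hpos (x + b) ltac:(lra)). nra.
  - rewrite Rplus_0_r in Ex. pose proof (Hpos x ltac:(lra)). nra.
  - pose proof (f_decr f Hf (x + b) x ltac:(lra) ltac:(lra)).
    pose proof (Hpos (x + b) ltac:(lra)). nra.
  - rewrite Rplus_0_r in Ex. pose proof (Hpos x ltac:(lra)). nra.
Qed.
Theorem lemma3p4 (f : R -> R) (a b c : R) :
  strongly_hyperbolic f -> 0 < a -> a <> 1 ->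
  ((b <> 0 /\ c = 0) \/ (b = 0 /\ c <> 0)) ->
  (forall x y, is_root f a b c x -> is_root f a b c y -> x = y) /\
  (let S1 :=
     (exists x0, is_root f a b c x0 /\
        (forall y, is_root f a b c y -> y = x0) /\
        changes_sign_at (fcheck f a b c) x0 /\
        ex_derive (fcheck f a b c) x0 /\ Derive (fcheck f a b c) x0 <> 0) /\
     ((a > 1 /\ b > 0 /\ c = 0) \/ (a > 1 /\ b = 0 /\ c < 0) \/
      (a < 1 /\ b < 0 /\ c = 0) \/ (a < 1 /\ b = 0 /\ c > 0)) in
   let S2 :=
     (forall x, ~ is_root f a b c x) /\
     ((a < 1 /\ b > 0 /\ c = 0) \/ (a < 1 /\ b = 0 /\ c < 0) \/
      (a > 1 /\ b < 0 /\ c = 0) \/ (a > 1 /\ b = 0 /\ c > 0)) in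
   (S1 /\ ~ S2) \/ (~ S1 /\ S2)).
Proof.
  intros Hf Ha Ha1 Hcond.
  split. { apply uniq_roots; auto. }
  cbv zeta.
  assert (Hdis : forall P Q : Prop,
    ((a > 1 /\ b > 0 /\ c = 0) \/ (a > 1 /\ b = 0 /\ c < 0) \/
      (a < 1 /\ b < 0 /\ c = 0) \/ (a < 1 /\ b = 0 /\ c > 0)) ->
    ((a < 1 /\ b > 0 /\ c = 0) \/ (a < 1 /\ b = 0 /\ c < 0) \/
      (a > 1 /\ b < 0 /\ c = 0) \/ (a > 1 /\ b = 0 /\ c > 0)) -> P).
  { intros P Q H1 H2. exfalso. lra. }
  assert (Htot : ((a > 1 /\ b > 0 /\ c = 0) \/ (a > 1 /\ b = 0 /\ c < 0) \/
      (a < 1 /\ b < 0 /\ c = 0) \/ (a < 1 /\ b = 0 /\ c > 0)) \/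
    ((a < 1 /\ b > 0 /\ c = 0) \/ (a < 1 /\ b = 0 /\ c < 0) \/
      (a > 1 /\ b < 0 /\ c = 0) \/ (a > 1 /\ b = 0 /\ c > 0))).
  { destruct (Rtotal_order a 1) as [A|[A|A]]; [|tauto|];
    destruct Hcond as [[Hb Hc]|[Hb Hc]];
    (destruct (Rtotal_order b 0) as [B|[B|B]]; [|try tauto|]);
    (destruct (Rtotal_order c 0) as [C|[C|C]]; [|try tauto|]); try lra; tauto. }
  destruct Htot as [H1|H2].
  - left. split.
    + split; auto.
      destruct (pts1 f a b c Hf Ha H1) as [s [t [Hs [Hst Hp]]]].
      apply (exists_part f a b c Hf Ha Ha1 Hcond s t Hs Hst Hp).
    + intros [_ H2]. exact (Hdis False True H1 H2).
  - right. split.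
    + intros [_ H1]. exact (Hdis False True H1 H2).
    + split; auto. apply noroot; auto.
Qed.
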